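(* Let $\Gamma=\{\mathrm{id},\gamma\}$ and $\tau(\gamma)$ be the half-turn $(x,y,z)\mapsto(x,-y,-z)$. Let $G$ be a $\Gamma$-symmetric graph (write $u'=\phi(\gamma)u$) with an edge $vv'$ where $v\ne v'$. Let $G_1$ be the graph with $V(G_1)=V(G)\cup\{w,w'\}$ ($w,w'$ new, swapped by the action) and $E(G_1)=E(G)\setminus\{vv'\}\cup\{wv,wv',w'v,w'v',ww'\}$. If $G$ is $\tau(\Gamma)$-rigid on $\mathcal{Y}$, then $G_1$ is $\tau(\Gamma)$-rigid on $\mathcal{Y}$.
   Context: $\mathcal{Y}=\{(x,y,z):x^2+y^2=1\}$. A framework on $\mathcal{Y}$ is $(G,p)$, $G$ finite simple, $p:V\to\mathcal{Y}$, $p(u)\neq p(v)$ for edges $uv$. Its rigidity matrix $R_{\mathcal{Y}}(G,p)$ is the $(|E|+|V|)\times 3|V|$ matrix with a row for each edge $v_iv_j$ having $p(v_i)-p(v_j)$ in the columns of $v_i$ and $p(v_j)-p(v_i)$ in those of $v_j$, and a row for each vertex $v_i$ with $p(v_i)=(x_i,y_i,z_i)$ having $(x_i,y_i,0)$ in the columns of $v_i$ (zeros elsewhere). The framework is infinitesimally rigid if every kernel vector $u$ has the form $u_i=(0,0,a)+b(-y_i,x_i,0)$. A graph is $\Gamma$-symmetric if equipped with a homomorphism $\phi:\Gamma\to\operatorname{Aut}(G)$. A framework is $\Gamma$-symmetric w.r.t. $\phi,\tau$ if $\tau(\gamma)p(v)=p(\phi(\gamma)v)$. $G$ is $\tau(\Gamma)$-rigid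 if some $\Gamma$-symmetric framework $(G,p)$ on $\mathcal{Y}$ is infinitesimally rigid. *)

(* Defs.v *)
From HB Require Import structures.
From mathcomp Require Import all_boot all_order all_algebra.
From mathcomp Require Import reals.
Set Implicit Arguments. Unset Strict Implicit. Unset Printing Implicit Defensive.
Import Order.TTheory GRing.Theory Num.Theory.
Local Open Scope ring_scope.

Section Defs.
Variable R : realType.

Record pt := Pt { px : R; py : R; pz : R }.

Definition dot3 (a b : pt) : R := px a * px b + py a * py b + pz a * pz b.
Definition sub3 (a b : pt) : pt := Pt (px a - px b) (py a - py b) (pz a - pz b).

Definition on_cyl (q : pt) : Prop := px q ^+ 2 + py q ^+ 2 = 1.

Definition halfturn (q : pt) : pt := Pt (px q) (- py q) (- pz q).

Variable V : finType.

Definition framework_on_cyl (E : rel V) (p : V -> pt) : Prop :=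
  (forall i, on_cyl (p i)) /\ (forall i j, E i j -> p i <> p j).

(* u : V -> R^3 (a vector of R^{3|V|}) lies in the kernel of the rigidity
   matrix R_Y(G,p): the row of edge v_i v_j gives
   (p_i - p_j).u_i + (p_j - p_i).u_j = 0, the row of vertex v_i gives
   (x_i, y_i, 0).u_i = 0. *)
Definition in_ker_rigmx (E : rel V) (p : V -> pt) (u : V -> pt) : Prop :=
  (forall i j, E i j ->
      dot3 (sub3 (p i) (p j)) (u i) + dot3 (sub3 (p j) (p i)) (u j) = 0) /\
  (forall i, dot3 (Pt (px (p i)) (py (p i)) 0) (u i) = 0).

Definition inf_rigid (E : rel V) (p : V -> pt) : Prop :=
  forall u, in_ker_rigmx E p u ->
    exists a b : R, forall i,
      u i = Pt (0 + b * - py (p i)) (0 + b * px (p i)) (a + b * 0).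

(* Gamma = {id, gamma} = Z/2 acts on G via phi(gamma) = s, an involutive
   graph automorphism. *)
Definition simple_graph (E : rel V) : Prop :=
  (forall i j, E i j = E j i) /\ (forall i, ~~ E i i).
Definition Z2_action (E : rel V) (s : V -> V) : Prop :=
  (forall i, s (s i) = i) /\ (forall i j, E (s i) (s j) = E i j).

(* framework Gamma-symmetric wrt phi, tau: tau(gamma) p(v) = p(phi(gamma) v)
   (the condition for gamma = id is trivial) *)
Definition sym_framework (s : V -> V) (p : V -> pt) : Prop :=
  forall i, halfturn (p i) = p (s i).

Definition tau_rigid (E : rel V) (s : V -> V) : Prop :=
  exists p : V -> pt, framework_on_cyl E p /\ sym_framework s p /\ inf_rigid E p.

End Defs.

(* The graph G1: vertices V + bool, inl a = old vertex a, inr false = w,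
   inr true = w'. *)
Section Ext.
Variables (V : finType) (E : rel V) (s : V -> V) (v : V).

Definition is_vv' (a b : V) : bool :=
  ((a == v) && (b == s v)) || ((a == s v) && (b == v)).

Definition ext_edge (x y : V + bool) : bool :=
  match x, y with
  | inl a, inl b => E a b && ~~ is_vv' a b
  | inl a, inr _ => (a == v) || (a == s v)
  | inr _, inl b => (b == v) || (b == s v)
  | inr c, inr d => c != d
  end.

Definition ext_act (x : V + bool) : V + bool :=
  match x with
  | inl a => inl (s a)
  | inr c => inr (~~ c)
  end.
End Ext.

(* Main.v *)
Require Import Defs.
From HB Require Import structures.
From mathcomp Require Import all_boot all_order all_algebra.
From mathcomp Require Import reals ring lra.
From Stdlib Require Classical_Prop.
Set Implicit Arguments. Unset Strict Implicit. Unset Printing Implicit Defensive.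
Import Order.TTheory GRing.Theory Num.Theory.
Local Open Scope ring_scope.

Lemma comb (R : realType) (n : nat) (c1 c2 c3 c4 c5 c6 c7 : R) (t e1 e2 e3 e4 e5 e6 e7 : R) :
  e1 = 0 -> e2 = 0 -> e3 = 0 -> e4 = 0 -> e5 = 0 -> e6 = 0 -> e7 = 0 ->
  n.+1%:R * t = c1 * e1 + c2 * e2 + c3 * e3 + c4 * e4 + c5 * e5 + c6 * e6 + c7 * e7 ->
  t = 0.
Proof.
move=> -> -> -> -> -> -> -> /eqP; rewrite !mulr0 !addr0 mulf_eq0 pnatr_eq0 /=.
by move/eqP.
Qed.

Arguments comb {R} n c1 c2 c3 c4 c5 c6 c7 {t e1 e2 e3 e4 e5 e6 e7}.

Lemma mulf0r (R : realType) (x y : R) : x * y = 0 -> x != 0 -> y = 0.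
Proof. by move/eqP; rewrite mulf_eq0 => /orP[/eqP->|/eqP->]; rewrite ?eqxx. Qed.
Lemma mulf0l (R : realType) (x y : R) : x * y = 0 -> y != 0 -> x = 0.
Proof. by move/eqP; rewrite mulf_eq0 => /orP[/eqP->|/eqP->]; rewrite ?eqxx. Qed.

Definition scale3 (R : realType) (k : R) (a : pt R) : pt R :=
  Pt (k * px a) (k * py a) (k * pz a).
Definition add3 (R : realType) (a b : pt R) : pt R :=
  Pt (px a + px b) (py a + py b) (pz a + pz b).

Definition chooseQ (R : realType) (P D : pt R) : pt R :=
  if (px P != 0) && (py P != 0) then Pt (px P) (py P) (pz P + 1)
  else if py P == 0 then Pt 0 1 (if py D + pz D != 0 then 1 else 2)
  else Pt (if px D != pz P * pz D then 1 else -1) 0 1.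

Lemma core (R : realType) (P D X Y Q : pt R) (k : R) :
  on_cyl P -> P <> halfturn P ->
  (k = 0 \/ (px P * px D + py P * py D = 0 /\ py P * py D + pz P * pz D != 0)) ->
  Q = chooseQ P D ->
  dot3 (Pt (px Q) (py Q) 0) X = 0 ->
  dot3 (Pt (px (halfturn Q)) (py (halfturn Q)) 0) Y = 0 ->
  dot3 (sub3 Q P) X + dot3 (sub3 P Q) (scale3 k D) = 0 ->
  dot3 (sub3 Q (halfturn P)) X + dot3 (sub3 (halfturn P) Q) (scale3 k (halfturn D)) = 0 ->
  dot3 (sub3 (halfturn Q) P) Y + dot3 (sub3 P (halfturn Q)) (scale3 k D) = 0 ->
  dot3 (sub3 (halfturn Q) (halfturn P)) Y
    + dot3 (sub3 (halfturn P) (halfturn Q)) (scale3 k (halfturn D)) = 0 ->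
  dot3 (sub3 Q (halfturn Q)) X + dot3 (sub3 (halfturn Q) Q) Y = 0 ->
  k = 0 /\ X = Pt 0 0 0 /\ Y = Pt 0 0 0.
Proof.
case: P => a b c; case: D => d1 d2 d3; case: X => x1 x2 x3; case: Y => y1 y2 y3.
rewrite /on_cyl /chooseQ /halfturn /= => hcyl hPH hk ->.
case: ifP => [/andP[ha hb]|hab].
  rewrite /dot3 /sub3 /scale3 /= => h1 h2 h3 h4 h5 h6 h7.
  have hK : k * (b * d2 + c * d3) = 0.
    by apply: (comb 3 0 0 1 1 1 1 (-1) h1 h2 h3 h4 h5 h6 h7); ring.

  have hk0 : k = 0 by case: hk => [//|[_ hD]]; exact: (mulf0l hK).
  subst k.
  have hx3 : x3 = 0 by apply: (comb 0 0 0 1 0 0 0 0 h1 h2 h3 h4 h5 h6 h7); ring.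
  have hy3 : y3 = 0 by apply: (comb 0 0 0 0 0 0 (-1) 0 h1 h2 h3 h4 h5 h6 h7); ring.
  subst x3 y3.
  have hx2 : x2 = 0.
    apply: (mulf0r _ hb); by apply: (comb 3 0 0 0 1 (-1) 0 1 h1 h2 h3 h4 h5 h6 h7); ring.
  have hy2 : y2 = 0.
    apply: (mulf0r _ hb); by apply: (comb 3 0 0 0 1 (-1) 0 (-1) h1 h2 h3 h4 h5 h6 h7); ring.
  subst x2 y2.
  have hx1 : x1 = 0.
    apply: (mulf0r _ ha); by apply: (comb 0 1 0 0 0 0 0 0 h1 h2 h3 h4 h5 h6 h7); ring.
  have hy1 : y1 = 0.
    apply: (mulf0r _ ha); by apply: (comb 0 0 1 0 0 0 0 0 h1 h2 h3 h4 h5 h6 h7); ring.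
  by subst.
case: ifP => hb.
  move/eqP: hb => hb; subst b.
  have ha : a != 0.
    apply/eqP => ha; subst a; move: hcyl; rewrite expr0n /= addr0 => /eqP.
    by rewrite eq_sym oner_eq0.
  have hc : c != 0.
    apply/eqP => hc; subst c; apply: hPH; by rewrite !oppr0.
  have hgp : (if d2 + d3 != 0 then 1 else 2 : R) != 0 /\
     (k = 0 \/ d2 + (if d2 + d3 != 0 then 1 else 2) * d3 != 0).
    split; first by case: ifP => _; rewrite ?oner_eq0 ?pnatr_eq0.
    case: hk => [|[_ hD]]; [by left|right].
    have hd3 : d3 != 0 by apply: contraNneq hD => ->; rewrite !mulr0 mul0r addr0.
    case: ifP => [|/negbFE/eqP h]; first by rewrite mul1r.
    have -> : d2 + 2 * d3 = (d2 + d3) + d3 by ring.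
    by rewrite h add0r.
  move: (if d2 + d3 != 0 then 1 else 2 : R) hgp => g [hg0 hgk].
  rewrite /dot3 /sub3 /scale3 /= => h1 h2 h3 h4 h5 h6 h7.
  have hx3 : x3 = 0.
    apply: (mulf0r _ hg0); apply: (mulf0r _ hc).
    by apply: (comb 3 (-2*c) (-2*c) (-g) g (-g) g c h1 h2 h3 h4 h5 h6 h7); ring.
  have hy3 : y3 = 0.
    apply: (mulf0r _ hg0); apply: (mulf0r _ hc).
    by apply: (comb 3 (2*c) (2*c) (-g) g (-g) g (-c) h1 h2 h3 h4 h5 h6 h7); ring.
  subst x3 y3.
  have hK : k * (d2 + g * d3) = 0.
    by apply: (comb 1 0 0 (-1) 1 0 0 0 h1 h2 h3 h4 h5 h6 h7); ring.
  have hk0 : k = 0 by case: hgk => [//|hD]; exact: (mulf0l hK).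
  subst k.
  have hx2 : x2 = 0 by apply: (comb 0 1 0 0 0 0 0 0 h1 h2 h3 h4 h5 h6 h7); ring.
  have hy2 : y2 = 0 by apply: (comb 0 0 (-1) 0 0 0 0 0 h1 h2 h3 h4 h5 h6 h7); ring.
  subst x2 y2.
  have hx1 : x1 = 0.
    apply: (mulf0r _ ha); by apply: (comb 0 0 0 (-1) 0 0 0 0 h1 h2 h3 h4 h5 h6 h7); ring.
  have hy1 : y1 = 0.
    apply: (mulf0r _ ha); by apply: (comb 0 0 0 0 0 (-1) 0 0 h1 h2 h3 h4 h5 h6 h7); ring.
  by subst.
have hb' : b != 0 by rewrite hb.
have ha : a = 0 by apply/eqP; move: hab; rewrite hb' andbT => /negbFE.
subst a.
have htp : (if d1 != c * d3 then 1 else -1 : R) != 0 /\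
   (k = 0 \/ b * d2 + c * d3 - (if d1 != c * d3 then 1 else -1) * d1 != 0).
  split; first by case: ifP => _; rewrite ?oppr_eq0 oner_eq0.
  case: hk => [|[hS hD]]; [by left|right].
  have hbd : b * d2 = 0 by rewrite -hS; ring.
  rewrite hbd add0r in hD *.
  case: ifP => [h|/negbFE/eqP h]; first by rewrite mul1r subr_eq0 eq_sym.
  have -> : c * d3 - -1 * d1 = 2 * (c * d3) by rewrite h; ring.
  by rewrite mulf_eq0 negb_or pnatr_eq0.
move: (if d1 != c * d3 then 1 else -1 : R) htp => t [ht0 htk].
rewrite /dot3 /sub3 /scale3 /= => h1 h2 h3 h4 h5 h6 h7.
have hx1 : x1 = 0.
  apply: (mulf0r _ ht0); by apply: (comb 0 1 0 0 0 0 0 0 h1 h2 h3 h4 h5 h6 h7); ring.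
have hy1 : y1 = 0.
  apply: (mulf0r _ ht0); by apply: (comb 0 0 1 0 0 0 0 0 h1 h2 h3 h4 h5 h6 h7); ring.
subst x1 y1.
have hx3 : x3 = 0 by apply: (comb 3 0 0 1 1 (-1) (-1) 1 h1 h2 h3 h4 h5 h6 h7); ring.
have hy3 : y3 = 0 by apply: (comb 3 0 0 1 1 (-1) (-1) (-1) h1 h2 h3 h4 h5 h6 h7); ring.
subst x3 y3.
have hK : k * (b * d2 + c * d3 - t * d1) = 0.
  by apply: (comb 1 0 0 1 1 0 0 0 h1 h2 h3 h4 h5 h6 h7); ring.
have hk0 : k = 0 by case: htk => [//|hD]; exact: (mulf0l hK).
subst k.
have hx2 : x2 = 0.
  apply: (mulf0r _ hb'); by apply: (comb 1 0 0 (-1) 1 0 0 0 h1 h2 h3 h4 h5 h6 h7); ring.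
have hy2 : y2 = 0.
  apply: (mulf0r _ hb'); by apply: (comb 1 0 0 0 0 (-1) 1 0 h1 h2 h3 h4 h5 h6 h7); ring.
by subst.
Qed.

Definition triv (R : realType) (ta tb : R) (q : pt R) : pt R :=
  Pt (0 + tb * - py q) (0 + tb * px q) (ta + tb * 0).

Lemma chooseQ_ok (R : realType) (P D : pt R) : on_cyl P -> P <> halfturn P ->
  on_cyl (chooseQ P D) /\ chooseQ P D <> P /\ chooseQ P D <> halfturn P /\
  halfturn (chooseQ P D) <> P /\ halfturn (chooseQ P D) <> halfturn P /\
  chooseQ P D <> halfturn (chooseQ P D).
Proof.
case: P => a b c; rewrite /on_cyl /chooseQ /halfturn /= => hcyl hPH.
case: ifP => [/andP[/eqP ha /eqP hb]|hab].
  split=> //; split; first by case=> *; lra.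
  split; first by case=> *; apply: hb; lra.
  split; first by case=> *; apply: hb; lra.
  split; first by case=> *; lra.
  by case=> *; apply: hb; lra.
case: ifP => hb.
  move/eqP: hb => hb; subst b.
  have ha : a <> 0.
    move=> ha; subst a; move: hcyl; rewrite expr0n /= addr0 => /eqP.
    by rewrite eq_sym oner_eq0.
  split; first by rewrite /=; ring.
  split; first by case=> *; apply: ha; lra.
  split; first by case=> *; apply: ha; lra.
  split; first by case=> *; apply: ha; lra.
  split; first by case=> *; apply: ha; lra.
  by move=> /(congr1 (@py R)) /=; lra.
have ha : a = 0 by apply/eqP; move: hab; rewrite hb andbT => /negbFE.
subst a.
have ht : (if px D != c * pz D then 1 else -1 : R) <> 0.
  by case: ifP => _ /eqP; rewrite ?oppr_eq0 oner_eq0.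
split; first by case: ifP => _ /=; ring.
split; first by case=> *; apply: ht; lra.
split; first by case=> *; apply: ht; lra.
split; first by case=> *; apply: ht; lra.
split; first by case=> *; apply: ht; lra.
by move=> /(congr1 (@pz R)) /=; lra.
Qed.

Lemma on_cyl_halfturn (R : realType) (q : pt R) : on_cyl q -> on_cyl (halfturn q).
Proof. by rewrite /on_cyl /= sqrrN. Qed.

Lemma halfturnK (R : realType) (q : pt R) : halfturn (halfturn q) = q.
Proof. by case: q => a b c; rewrite /halfturn /= !opprK. Qed.

Lemma dot3_add (R : realType) (a b c : pt R) : dot3 a (add3 b c) = dot3 a b + dot3 a c.
Proof. rewrite /dot3 /add3 /=; ring. Qed.
Lemma dot3_scale (R : realType) (a b : pt R) k : dot3 a (scale3 k b) = k * dot3 a b.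
Proof. rewrite /dot3 /scale3 /=; ring. Qed.

Lemma lin2 (R : realType) (k : R) (t e1 e2 : R) : e1 = 0 -> e2 = 0 -> t = e1 + k * e2 -> t = 0.
Proof. by move=> -> -> ->; rewrite mulr0 addr0. Qed.
Arguments lin2 {R} k {t e1 e2}.

Lemma ker_lin (R : realType) (V : finType) (E : rel V) (p x y : V -> pt R) (k : R) :
  in_ker_rigmx E p x -> in_ker_rigmx E p y ->
  in_ker_rigmx E p (fun i => add3 (x i) (scale3 k (y i))).
Proof.
move=> [hx1 hx2] [hy1 hy2]; split=> [i j hij|i]; rewrite !dot3_add !dot3_scale.
  by apply: (lin2 k (hx1 i j hij) (hy1 i j hij)); ring.
by apply: (lin2 k (hx2 i) (hy2 i)); ring.
Qed.

Lemma ker_triv (R : realType) (V : finType) (E : rel V) (p : V -> pt R) ta tb :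
  in_ker_rigmx E p (fun i => triv ta tb (p i)).
Proof. by split=> [i j _|i]; rewrite /dot3 /sub3 /triv /=; ring. Qed.

Lemma dotH (R : realType) (a b c : pt R) :
  dot3 (sub3 (halfturn a) (halfturn b)) (halfturn c) = dot3 (sub3 a b) c.
Proof. rewrite /dot3 /sub3 /halfturn /=; ring. Qed.

Lemma dotHs (R : realType) (a c : pt R) :
  dot3 (Pt (px (halfturn a)) (py (halfturn a)) 0) (halfturn c) = dot3 (Pt (px a) (py a) 0) c.
Proof. rewrite /dot3 /halfturn /=; ring. Qed.

Lemma add3_inv (R : realType) (a b c : pt R) k :
  add3 a (scale3 (- k) b) = c -> a = add3 c (scale3 k b).
Proof.
case: a => a1 a2 a3; case: b => b1 b2 b3; case: c => c1 c2 c3.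
rewrite /add3 /scale3 /= => -[<- <- <-]; congr Pt; ring.
Qed.

Theorem lemma4p8 (R : realType) (V : finType) (E : rel V) (s : V -> V) (v : V) :
  simple_graph E -> Z2_action E s ->
  E v (s v) -> v != s v ->
  tau_rigid R E s ->
  tau_rigid R (ext_edge E s v) (ext_act s).
Proof.
move=> [hsymE hirr] [hs hsE] hEv hvne [p [[hcyl hdist] [hsym hrig]]].
pose E' := fun i j => E i j && ~~ is_vv' s v i j.
pose f := fun x : V -> pt R =>
  dot3 (sub3 (p v) (p (s v))) (x v) + dot3 (sub3 (p (s v)) (p v)) (x (s v)).
have hPs : p (s v) = halfturn (p v) by rewrite hsym.
have hPH : p v <> halfturn (p v) by rewrite -hPs; exact: hdist.
have hf_lin : forall x y k, f (fun i => add3 (x i) (scale3 k (y i))) = f x + k * f y.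
  by move=> x y k; rewrite /f !dot3_add !dot3_scale; ring.
have hkerE : forall x, in_ker_rigmx E' p x -> f x = 0 -> in_ker_rigmx E p x.
  move=> x [h1 h2] hf; split => // i j hij.
  case hv: (is_vv' s v i j); last by apply: h1; rewrite /E' hij hv.
  move: hv; rewrite /is_vv' => /orP[/andP[/eqP-> /eqP->]|/andP[/eqP-> /eqP->]].
    exact: hf.
  by rewrite addrC.
have hs_inj : forall i j, (s i == s j) = (i == j).
  by move=> i j; apply/eqP/eqP => [h|->//]; rewrite -(hs i) h hs.
have hsv : forall i, (s i == v) = (i == s v).
  by move=> i; rewrite -{1}(hs v) hs_inj.
have hE's : forall i j, E' (s i) (s j) = E' i j.
  move=> i j; rewrite /E' hsE /is_vv' !hsv !hs_inj.
  by rewrite [X in ~~ X]orbC.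
have hp_s : forall i, p i = halfturn (p (s i)) by move=> i; rewrite hsym hs.
have hker_sym : forall x, in_ker_rigmx E' p x ->
    in_ker_rigmx E' p (fun i => halfturn (x (s i))).
  move=> x [h1 h2]; split=> [i j hij|i].
    rewrite (hp_s i) (hp_s j) !dotH; apply: h1; by rewrite hE's.
  by rewrite (hp_s i) dotHs.
have [ms [hms_ker [hms_sym hdec]]] : exists ms : V -> pt R,
    in_ker_rigmx E' p ms /\ (forall i, ms (s i) = halfturn (ms i)) /\
    (forall x, in_ker_rigmx E' p x -> exists ta tb kk : R,
        (kk = 0 \/ (px (p v) * px (ms v) + py (p v) * py (ms v) = 0 /\
                    py (p v) * py (ms v) + pz (p v) * pz (ms v) != 0)) /\
        forall i, x i = add3 (triv ta tb (p i)) (scale3 kk (ms i))).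
  case: (Classical_Prop.classic (exists m, in_ker_rigmx E' p m /\ f m != 0)) =>
      [[m [hm hfm]]|hno].
    pose ms := fun i => add3 (m i) (scale3 1 (halfturn (m (s i)))).
    have hms : in_ker_rigmx E' p ms by apply: ker_lin => //; exact: hker_sym.
    have hfms : f ms = 2 * f m.
      rewrite /f /ms hs hPs /dot3 /sub3 /add3 /scale3 /halfturn /=; ring.
    have hfms0 : f ms != 0 by rewrite hfms mulf_eq0 negb_or pnatr_eq0.
    exists ms; split => //; split.
      move=> i; rewrite /ms hs /add3 /scale3 /halfturn /=; congr Pt; ring.
    move=> x hx.
    pose kk := f x / f ms.
    pose y := fun i => add3 (x i) (scale3 (- kk) (ms i)).
    have hy : in_ker_rigmx E' p y by exact: ker_lin.
    have hfy : f y = 0 by rewrite /y hf_lin /kk mulNr divfK // subrr.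
    have [ta [tb htr]] := hrig y (hkerE y hy hfy).
    exists ta, tb, kk; split; last by move=> i; apply: add3_inv; exact: htr.
    right; split.
      have := hms.2 v; rewrite /dot3 /= mul0r addr0 => ->; done.
    have hfm2 : f m = 2 * (py (p v) * py (ms v) + pz (p v) * pz (ms v)).
      rewrite /f /ms hPs /dot3 /sub3 /add3 /scale3 /halfturn /=; ring.
    by move: hfm; rewrite hfm2 mulf_eq0 negb_or => /andP[].
  exists (fun _ => Pt 0 0 0); split.
    by split=> [i j _|i]; rewrite /dot3 /=; ring.
  split; first by move=> i; rewrite /halfturn /= oppr0.
  move=> x hx.
  have hfx : f x = 0.
    apply/eqP; apply/negPn/negP => h; apply: hno; exists x; split => //.
  have [ta [tb htr]] := hrig x (hkerE x hx hfx).
  exists ta, tb, 0; split; first by left.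
  move=> i; rewrite htr /add3 /scale3 /triv /=; congr Pt; ring.
pose Q := chooseQ (p v) (ms v).
have [hQcyl [hQP [hQHP [hHQP [hHQHP hQHQ]]]]] := chooseQ_ok (ms v) (hcyl v) hPH.
pose q := fun x : V + bool =>
  match x with inl i => p i | inr false => Q | inr true => halfturn Q end.
exists q; split; [split|split].
- by case=> [i|[]] /=; [exact: hcyl | exact: on_cyl_halfturn | exact: hQcyl].
- case=> [i|[]] [j|[]] //= h.
  + by move/andP: h => [h _]; exact: hdist.
  + by case/orP: h => /eqP->; [move/esym| rewrite hPs; move/esym].
  + by case/orP: h => /eqP->; [move/esym| rewrite hPs; move/esym].
  + by case/orP: h => /eqP->; [|rewrite hPs].
  + by move/esym.
  + by case/orP: h => /eqP->; [|rewrite hPs].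
- by case=> [i|[]] /=; [exact: hsym | rewrite halfturnK | ].
move=> u hu.
have hu0 : in_ker_rigmx E' p (fun i => u (inl i)).
  by case: hu => h1 h2; split=> [i j hij|i]; [exact: (h1 (inl i) (inl j) hij)|exact: (h2 (inl i))].
have [ta [tb [kk [hkk hdecu]]]] := hdec _ hu0.
pose T := fun x => triv ta tb (q x).
pose u' := fun x => add3 (u x) (scale3 (-1) (T x)).
have hu' : in_ker_rigmx (ext_edge E s v) q u' by apply: ker_lin => //; exact: ker_triv.
have hu'V : forall i, u' (inl i) = scale3 kk (ms i).
  move=> i; rewrite /u' /T /=; have := hdecu i => /= ->.
  rewrite /add3 /scale3 /triv /=; congr Pt; ring.
case: hu' => he hsurf.
have e3 : dot3 (sub3 Q (p v)) (u' (inr false)) + dot3 (sub3 (p v) Q) (scale3 kk (ms v)) = 0.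
  by rewrite -hu'V; apply: (he (inr false) (inl v)); rewrite /= eqxx.
have e4 : dot3 (sub3 Q (halfturn (p v))) (u' (inr false))
   + dot3 (sub3 (halfturn (p v)) Q) (scale3 kk (halfturn (ms v))) = 0.
  by rewrite -hPs -hms_sym -hu'V; apply: (he (inr false) (inl (s v))); rewrite /= eqxx orbT.
have e5 : dot3 (sub3 (halfturn Q) (p v)) (u' (inr true)) + dot3 (sub3 (p v) (halfturn Q)) (scale3 kk (ms v)) = 0.
  by rewrite -hu'V; apply: (he (inr true) (inl v)); rewrite /= eqxx.
have e6 : dot3 (sub3 (halfturn Q) (halfturn (p v))) (u' (inr true))
   + dot3 (sub3 (halfturn (p v)) (halfturn Q)) (scale3 kk (halfturn (ms v))) = 0.
  by rewrite -hPs -hms_sym -hu'V; apply: (he (inr true) (inl (s v))); rewrite /= eqxx orbT.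
have e7 : dot3 (sub3 Q (halfturn Q)) (u' (inr false)) + dot3 (sub3 (halfturn Q) Q) (u' (inr true)) = 0.
  exact: (he (inr false) (inr true)).
have [hk0 [hX hY]] := core (hcyl v) hPH hkk (erefl Q) (hsurf (inr false)) (hsurf (inr true))
  e3 e4 e5 e6 e7.
exists ta, tb; case=> [i|c].
  have := hdecu i => /= ->; rewrite hk0 /add3 /scale3 /triv /=; congr Pt; ring.
have hc : u' (inr c) = Pt 0 0 0 by case: c.
move: hc; rewrite /u' => /add3_inv ->.
rewrite /add3 /scale3 /T /triv /=; congr Pt; ring.
Qed.
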